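(* Let $n\ge3$, $c\ge1$, $r_2\in\mathbb{C}^*$, and consider the representations $\omega'_j$ ($j=1,2,3$) of $UW_n(c)$ into $\mathrm{GL}_n(\mathbb{C})$ given, for $1\le i\le n-1$ and $1\le t\le c$, by $\omega'_j(\rho_i)=\mathrm{diag}\Big(I_{i-1},\begin{pmatrix}0&1\\1&0\end{pmatrix},I_{n-i-1}\Big)$ and $\omega'_1(\sigma_{i,t})=\mathrm{diag}\Big(I_{i-1},\begin{pmatrix}0&\frac{s_{2,t}}{r_2}\\ r_2s_{3,t}&0\end{pmatrix},I_{n-i-1}\Big)$, $\omega'_2(\sigma_{i,t})=\mathrm{diag}\Big(I_{i-1},\begin{pmatrix}0&\frac{s_{2,t}}{r_2}\\ 1&s_{4,t}\end{pmatrix},I_{n-i-1}\Big)$, $\omega'_3(\sigma_{i,t})=\mathrm{diag}\Big(I_{i-1},\begin{pmatrix}s_{1,t}&\frac{s_{2,t}}{r_2}\\ 1&0\end{pmatrix},I_{n-i-1}\Big)$, with all $s_{k,t}\in\mathbb{C}^*$. Then: (1) $\omega'_1$ is reducible if and only if $s_{2,t}=r_2$ and $s_{3,t}=\frac1{r_2}$ for all $1\le t\le c$; (2) $\omega'_2$ is reducible if and only if $\frac{s_{2,t}}{r_2}+s_{4,t}=1$ for all $1\le t\le c$; (3) $\omega'_3$ is reducible if and only if $s_{1,t}+\frac{s_{2,t}}{r_2}=1$ for all $1\le t\le c$.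
   Context: $UW_n(c)$ is the group with generators $\rho_i$ ($1\le i\le n-1$), $\sigma_{i,t}$ ($1\le i\le n-1$, $1\le t\le c$) and relations $\rho_i\rho_{i+1}\rho_i=\rho_{i+1}\rho_i\rho_{i+1}$, $\rho_i\rho_j=\rho_j\rho_i$ ($|i-j|\ge2$), $\rho_i^2=1$, $\sigma_{i,t}\sigma_{j,\ell}=\sigma_{j,\ell}\sigma_{i,t}$ ($|i-j|\ge2$), $\sigma_{i,t}\rho_j=\rho_j\sigma_{i,t}$ ($|i-j|\ge2$), $\rho_i\rho_{i+1}\sigma_{i,t}=\sigma_{i+1,t}\rho_i\rho_{i+1}$ and $\rho_i\sigma_{i+1,t}\sigma_{i,t}=\sigma_{i+1,t}\sigma_{i,t}\rho_{i+1}$ ($1\le i\le n-2$). $\mathrm{diag}$ denotes a block diagonal matrix, $I_r$ the $r\times r$ identity. Reducible means there is a nonzero proper subspace of $\mathbb{C}^n$ invariant under all image matrices. *)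

(* Defs.v *)
From HB Require Import structures.
From mathcomp Require Import all_boot all_algebra.
From mathcomp Require Import complex.
From mathcomp Require Import Rstruct.
Set Implicit Arguments. Unset Strict Implicit. Unset Printing Implicit Defensive.
Import GRing.Theory Num.Theory.
Local Open Scope ring_scope.

Definition C : numClosedFieldType := Rdefinitions.R[i].

(* blk2 n i a b c d = diag(I_i, [[a, b], [c, d]], I_(n-i-2)),
   i.e. the 2x2 block sits at (0-based) rows/columns i and i+1.
   Paper index i (1-based, 1 <= i <= n-1) corresponds to 0-based i-1 here. *)
Definition blk2 (n i : nat) (a b c d : C) : 'M[C]_n :=
  \matrix_(p < n, q < n)
    if (p == i :> nat) && (q == i :> nat) then a
    else if (p == i :> nat) && (q == i.+1 :> nat) then b
    else if (p == i.+1 :> nat) && (q == i :> nat) then c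
    else if (p == i.+1 :> nat) && (q == i.+1 :> nat) then d
    else (p == q)%:R.

Inductive gen_by (n : nat) (S : 'M[C]_n -> Prop) : 'M[C]_n -> Prop :=
  | gen_one : gen_by S 1%:M
  | gen_base A : S A -> gen_by S A
  | gen_mul A B : gen_by S A -> gen_by S B -> gen_by S (A *m B)
  | gen_inv A : gen_by S A -> gen_by S (invmx A).

(* A set of matrices acting on column vectors C^n is reducible if there is a
   nonzero proper subspace W of C^n with A w \in W for all w \in W.
   W is represented as the row space of a matrix U (rows = spanning vectors,
   as row vectors); A w for w = u^T equals (u *m A^T)^T, so invariance reads
   (U *m A^T <= U)%MS. *)
Definition reducible (n : nat) (G : 'M[C]_n -> Prop) : Prop :=
  exists U : 'M[C]_n,
    (0 < \rank U)%N /\ (\rank U < n)%N /\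
    forall A, G A -> (U *m A^T <= U)%MS.

Definition rep_image (n c : nat) (rho : nat -> 'M[C]_n)
  (sigma : nat -> 'I_c -> 'M[C]_n) : 'M[C]_n -> Prop :=
  gen_by (fun A => exists i : nat, (i < n.-1)%N /\
                   (A = rho i \/ exists t : 'I_c, A = sigma i t)).

Definition omega_rho (n : nat) (i : nat) : 'M[C]_n := blk2 n i 0 1 1 0.

Definition omega1_sigma (n c : nat) (r2 : C) (s2 s3 : 'I_c -> C) (i : nat) (t : 'I_c)
  : 'M[C]_n := blk2 n i 0 (s2 t / r2) (r2 * s3 t) 0.
Definition omega2_sigma (n c : nat) (r2 : C) (s2 s4 : 'I_c -> C) (i : nat) (t : 'I_c)
  : 'M[C]_n := blk2 n i 0 (s2 t / r2) 1 (s4 t).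
Definition omega3_sigma (n c : nat) (r2 : C) (s1 s2 : 'I_c -> C) (i : nat) (t : 'I_c)
  : 'M[C]_n := blk2 n i (s1 t) (s2 t / r2) 1 0.

(* Main.v *)
Require Import Defs.
From mathcomp Require Import all_boot all_algebra.
From mathcomp Require Import zify.
From Stdlib Require Import Classical.
Import GRing.Theory Num.Theory.
Local Open Scope ring_scope.


Lemma sum_two {R : nmodType} {N} (f : 'I_N -> R) {p q : 'I_N} : p != q ->
  (forall m, m != p -> m != q -> f m = 0) -> \sum_m f m = f p + f q.
Proof.
move=> pq H; rewrite (bigD1 p) //= (bigD1 q) /=; last by rewrite eq_sym.
rewrite big1 ?addr0 // => m /andP[mp mq]; exact: H.
Qed.

Lemma sum_one {R : nmodType} {N} (f : 'I_N -> R) (p : 'I_N) :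
  (forall m, m != p -> f m = 0) -> \sum_m f m = f p.
Proof.
move=> H; rewrite (bigD1 p) //= big1 ?addr0 // => m mp; exact: H.
Qed.

Lemma mulBT N (x : 'rV[C]_N) (p q : 'I_N) a b c d l :
  (q : nat) = p.+1 ->
  (x *m (blk2 N p a b c d)^T) 0 l =
  if (l == p :> nat) then a * x 0 p + b * x 0 q
  else if (l == q :> nat) then c * x 0 p + d * x 0 q else x 0 l.
Proof.
move=> Hq; rewrite mxE.
have pq : p != q by rewrite -val_eqE /= Hq neq_ltn ltnSn.
have E1 : (p.+1 == p :> nat) = false by rewrite gtn_eqF.
have E2 : (p == p.+1 :> nat) = false by rewrite ltn_eqF.
have Hm : forall m : 'I_N, m != p -> m != q ->
    (m == p :> nat) = false /\ (m == p.+1 :> nat) = false.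
  by move=> m mp mq; rewrite -Hq !val_eqE (negbTE mp) (negbTE mq).
case: eqP => [lp|lp].
  rewrite (sum_two _ pq).
    by rewrite !mxE lp Hq /= !eqxx E1 E2 /= [_ * a]mulrC [_ * b]mulrC.
  move=> m mp mq; have [h1 h2] := Hm m mp mq.
  rewrite !mxE /= lp eqxx E2 /= h1 h2.
  have -> : (l == m) = false by rewrite -val_eqE /= lp eq_sym h1.
  by rewrite mulr0.
case: eqP => [lq|lq].
  rewrite (sum_two _ pq).
    by rewrite !mxE lq Hq /= !eqxx E1 E2 /= [_ * c]mulrC [_ * d]mulrC.
  move=> m mp mq; have [h1 h2] := Hm m mp mq.
  rewrite !mxE /= lq Hq eqxx E1 /= h1 h2 /=.
  have -> : (l == m) = false by rewrite -val_eqE /= lq Hq eq_sym h2.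
  by rewrite mulr0.
have l1 : (l == p :> nat) = false by apply/eqP.
have l2 : (l == p.+1 :> nat) = false by rewrite -Hq; apply/eqP.
rewrite (sum_one _ l).
  by rewrite !mxE /= l1 l2 /= eqxx mulr1.
move=> m ml; rewrite !mxE /= l1 l2 /=.
by rewrite eq_sym (negbTE ml) mulr0.
Qed.

Lemma blk2_tr N i a b c d : (blk2 N i a b c d)^T = blk2 N i a c b d.
Proof.
apply/matrixP => p q; rewrite !mxE /=.
have F1 : (i == i.+1) = false by rewrite ltn_eqF.
have F2 : (i.+1 == i) = false by rewrite gtn_eqF.
have [pe|pi] := eqVneq (p:nat) i; have [qe|qi] := eqVneq (q:nat) i;
have [pe'|pi'] := eqVneq (p:nat) i.+1; have [qe'|qi'] := eqVneq (q:nat) i.+1;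
  rewrite ?pe ?qe ?pe' ?qe' ?eqxx ?F1 ?F2 ?(negbTE pi) ?(negbTE qi) ?(negbTE pi') ?(negbTE qi') //=;
  try (by rewrite eq_sym); try (by move: pe pe' => ->; rewrite F1); try (by move: qe qe' => ->; rewrite F1).
Qed.


Definition one_r N : 'rV[C]_N := const_mx 1.
Definition one_c N : 'cV[C]_N := const_mx 1.
Definition invU {N} (U A : 'M[C]_N) := (U *m A^T <= U)%MS.

Lemma gen_closed N (S : 'M[C]_N -> Prop) (U : 'M[C]_N) :
  (forall A, S A -> invU U A) -> forall A, gen_by S A -> invU U A.
Proof.
move=> HS A; elim => {A}.
- by rewrite /invU trmx1 mulmx1 submx_refl.
- exact: HS.
- move=> A B _ HA _ HB; rewrite /invU trmx_mul mulmxA.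
  exact: submx_trans (submxMr _ HB) HA.
- move=> A _ HA; case: (boolP (A \in unitmx)) => Au; last first.
    by rewrite invmx_out // inE.
  rewrite /invU trmx_inv.
  have Atu : A^T \in unitmx by rewrite unitmx_tr.
  have fr : row_free A^T by rewrite row_free_unit.
  have := mxrank_leqif_eq HA; rewrite (mxrankMfree _ fr) => -[_].
  rewrite eqxx => /esym /andP[_ HU].
  have := submxMr (invmx A^T) HU; rewrite mulmxK //.
Qed.


Lemma oneC_neq0 : (1 : C) = 0 -> False.
Proof. by move/eqP; rewrite oner_eq0. Qed.

Lemma const11 : (const_mx 1 : 'M[C]_1) = 1%:M.
Proof. by apply/matrixP => i j; rewrite !mxE !ord1 eqxx. Qed.

Lemma one_c_neq0 {N} (i0 : 'I_N) : one_c N != 0.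
Proof. by apply/eqP => /matrixP /(_ i0 0); rewrite !mxE; apply/eqP; rewrite oner_eq0. Qed.

Lemma back_L N (S : 'M[C]_N -> Prop) : (1 < N)%N ->
  (forall A, S A -> one_r N *m A^T = one_r N) -> reducible (gen_by S).
Proof.
move=> HN HS; pose i0 : 'I_N := Ordinal (ltnW HN).
exists (one_c N *m one_r N); split; [|split].
- rewrite lt0n mxrank_eq0; apply/eqP => /matrixP /(_ i0 i0).
  rewrite !mxE big_ord1 !mxE mulr1; apply/eqP; rewrite oner_eq0 //.
- apply: leq_ltn_trans (mxrankM_maxr _ _) _.
  exact: leq_ltn_trans (rank_leq_row _) HN.
- by apply: gen_closed => A HA; rewrite /invU -mulmxA HS.
Qed.

Definition UH {N} (i0 : 'I_N) : 'M[C]_N := 1%:M - one_c N *m delta_mx 0 i0.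

Lemma UH_one N (i0 : 'I_N) : UH i0 *m one_c N = 0.
Proof.
rewrite /UH mulmxBl mul1mx -mulmxA -rowE row_const const11 mulmx1 subrr //.
Qed.

Lemma UH_fix N (i0 : 'I_N) m (M : 'M[C]_(m, N)) : M *m one_c N = 0 -> M *m UH i0 = M.
Proof. by move=> H; rewrite /UH mulmxBr mulmx1 mulmxA H mul0mx subr0. Qed.

Lemma back_H N (S : 'M[C]_N -> Prop) : (1 < N)%N ->
  (forall A, S A -> one_r N *m A = one_r N) -> reducible (gen_by S).
Proof.
move=> HN HS; pose i0 : 'I_N := Ordinal (ltnW HN); pose j : 'I_N := Ordinal HN.
exists (UH i0); split; [|split].
- rewrite lt0n mxrank_eq0; apply/eqP => /matrixP /(_ j j).
  rewrite !mxE big_ord1 !mxE /= mulr0 subr0 mulr1n; exact: oneC_neq0.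
- rewrite ltn_neqAle rank_leq_col andbT; apply/negP => /eqP Hr.
  have Hu : UH i0 \in unitmx by rewrite -row_full_unit /row_full Hr.
  have := mulKmx Hu (one_c N); rewrite UH_one mulmx0 => /esym /eqP.
  by rewrite (negbTE (one_c_neq0 i0)).
- apply: gen_closed => A HA; rewrite /invU.
  have HT : A^T *m one_c N = one_c N.
    by have := congr1 trmx (HS A HA); rewrite trmx_mul /one_r trmx_const.
  rewrite -(@UH_fix N i0 _ (UH i0 *m A^T)) ?submxMl //.
  by rewrite -mulmxA HT UH_one.
Qed.


Definition ev N (k : nat) : 'rV[C]_N := \row_l ((l == k :> nat)%:R).
Definition Dv N (p q : nat) : 'rV[C]_N := ev N p - ev N q.
Definition tau (i k : nat) := if k == i then i.+1 else if k == i.+1 then i else k.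

Lemma mulBT' N (x : 'rV[C]_N) i a b c d l (Hi : (i.+1 < N)%N) :
  (x *m (blk2 N i a b c d)^T) 0 l =
  if (l == i :> nat) then a * x 0 (Ordinal (ltnW Hi)) + b * x 0 (Ordinal Hi)
  else if (l == i.+1 :> nat) then c * x 0 (Ordinal (ltnW Hi)) + d * x 0 (Ordinal Hi)
  else x 0 l.
Proof. exact: (@mulBT N x (Ordinal (ltnW Hi)) (Ordinal Hi) a b c d l erefl). Qed.

Lemma ev_swap N i k : (i.+1 < N)%N -> ev N k *m (omega_rho N i)^T = ev N (tau i k).
Proof.
move=> Hi; apply/matrixP => z l; rewrite ord1 /omega_rho mulBT' !mxE /=.
rewrite !mul0r !mul1r add0r addr0 /tau.
have F1 : (i == i.+1) = false by rewrite ltn_eqF.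
have F2 : (i.+1 == i) = false by rewrite gtn_eqF.
have [ke|ki] := eqVneq k i; have [ke'|ki'] := eqVneq k i.+1;
have [le|li] := eqVneq (l:nat) i; have [le'|li'] := eqVneq (l:nat) i.+1;
  rewrite ?ke ?ke' ?le ?le' ?eqxx ?F1 ?F2 ?(negbTE ki) ?(negbTE ki') ?(negbTE li) ?(negbTE li') //=;
  try (by move: ke'; rewrite ke => /eqP; rewrite F1); try (by move: le'; rewrite le => /eqP; rewrite F1);
  try (by rewrite eq_sym ?(negbTE ki) ?(negbTE ki')).
Qed.

Lemma subsub N m1 m2 (A B : 'M[C]_(m1, N)) (U : 'M[C]_(m2, N)) :
  (A <= U)%MS -> (B <= U)%MS -> (A - B <= U)%MS.
Proof. by move=> HA HB; apply: addmx_sub HA _; rewrite eqmx_opp. Qed.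

Lemma inv_row {N} {U A : 'M[C]_N} {x : 'rV[C]_N} :
  (x <= U)%MS -> invU U A -> (x *m A^T <= U)%MS.
Proof. by move=> Hx HA; apply: submx_trans (submxMr _ Hx) HA. Qed.

Lemma Dv_swap N i p q : (i.+1 < N)%N ->
  Dv N p q *m (omega_rho N i)^T = Dv N (tau i p) (tau i q).
Proof. by move=> Hi; rewrite /Dv mulmxBl !ev_swap. Qed.

Lemma alg1 (V : zmodType) (a b c : V) : b - c = (a - c) - (a - b).
Proof. by rewrite opprB [RHS]addrC [RHS]addrA subrK. Qed.
Lemma alg2 (V : zmodType) (a b c : V) : a - b = (a - c) - (b - c).
Proof. by rewrite opprB [RHS]addrA subrK. Qed.


Lemma chain_up N (U : 'M[C]_N) (HR : forall i, (i.+1 < N)%N -> invU U (omega_rho N i)) j : (j.+2 < N)%N -> (Dv N j j.+1 <= U)%MS -> (Dv N j.+1 j.+2 <= U)%MS.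
Proof.
move=> Hj H.
have H2 : (Dv N j j.+2 <= U)%MS.
  have := inv_row H (HR j.+1 Hj); rewrite Dv_swap // /tau eqxx.
  by rewrite ltn_eqF // ltn_eqF.
have -> : Dv N j.+1 j.+2 = Dv N j j.+2 - Dv N j j.+1.
  by rewrite /Dv -alg1.
exact: subsub.
Qed.

Lemma chain_down N (U : 'M[C]_N) (HR : forall i, (i.+1 < N)%N -> invU U (omega_rho N i)) j : (j.+2 < N)%N -> (Dv N j.+1 j.+2 <= U)%MS -> (Dv N j j.+1 <= U)%MS.
Proof.
move=> Hj H.
have H2 : (Dv N j j.+2 <= U)%MS.
  have := inv_row H (HR j (ltnW Hj)); rewrite Dv_swap ?(ltnW Hj) // /tau eqxx.
  by rewrite !gtn_eqF.
have -> : Dv N j j.+1 = Dv N j j.+2 - Dv N j.+1 j.+2.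
  by rewrite /Dv -alg2.
exact: subsub.
Qed.

Lemma chain_all N (U : 'M[C]_N) (HR : forall i, (i.+1 < N)%N -> invU U (omega_rho N i)) i : (i.+1 < N)%N -> (Dv N i i.+1 <= U)%MS ->
  forall j, (j.+1 < N)%N -> (Dv N j j.+1 <= U)%MS.
Proof.
move=> Hi H j Hj; case: (leqP i j) => Hij.
  have : forall d, ((i + d).+1 < N)%N -> (Dv N (i + d) (i + d).+1 <= U)%MS.
    elim => [|d IH] Hd; first by rewrite addn0.
    rewrite addnS; apply: (@chain_up _ _ HR); first by lia.
    apply: IH; lia.
  by move/(_ (j - i)%N); rewrite subnKC //; apply.
have : forall d, (d <= i)%N -> (Dv N (i - d) (i - d).+1 <= U)%MS.
  elim => [|d IH] Hd; first by rewrite subn0.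
  have E : (i - d = (i - d.+1).+1)%N by lia.
  apply: (@chain_down _ _ HR); first by lia.
  rewrite -E; apply: IH; lia.
move/(_ (i - j)%N); rewrite subKn ?(ltnW Hij) //; apply; exact: leq_subr.
Qed.

Lemma chain_D0 N (U : 'M[C]_N) : (forall j, (j.+1 < N)%N -> (Dv N j j.+1 <= U)%MS) ->
  forall k, (k < N)%N -> (Dv N k 0 <= U)%MS.
Proof.
move=> H; elim => [|k IH] Hk; first by rewrite /Dv subrr sub0mx.
have -> : Dv N k.+1 0 = Dv N k 0 - Dv N k k.+1.
  by rewrite /Dv -alg1.
apply: subsub; [apply: IH; lia | exact: H].
Qed.


Lemma mx11_eq (A B : 'M[C]_1) : A 0 0 = B 0 0 -> A = B.
Proof. by move=> H; apply/matrixP => i j; rewrite !ord1. Qed.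

Lemma subE N (A B : 'rV[C]_N) l : (A - B) 0 l = A 0 l - B 0 l.
Proof. by rewrite !mxE. Qed.

Lemma ev_mul {N m} (p : 'I_N) (z : 'M[C]_(N, m)) : ev N p *m z = row p z.
Proof.
apply/matrixP => i j; rewrite !mxE (sum_one _ p) ?mxE ?eqxx ?mul1r // => k kp.
by rewrite !mxE -[(k == p :> nat)]/(k == p) (negbTE kp) mul0r.
Qed.

Lemma UH_rows M (k : 'I_M.+1) : row k (UH (ord0 : 'I_M.+1)) = Dv M.+1 k 0.
Proof.
apply/matrixP => i l; rewrite !mxE big_ord1 !mxE /= mul1r.
by rewrite eq_sym.
Qed.

Lemma adj M (w : 'rV[C]_M.+1) :
  (forall i, (i.+1 < M.+1)%N -> w 0 (inord i) = w 0 (inord i.+1)) ->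
  forall l, w 0 l = w 0 ord0.
Proof.
move=> H.
have E : forall k, (k < M.+1)%N -> w 0 (inord k) = w 0 ord0.
  elim => [|k IH] Hk.
    by congr (w 0 _); apply: val_inj; rewrite /= inordK.
  by rewrite -H // IH // ltnW.
by move=> l; rewrite -(E l (ltn_ord l)) inord_val.
Qed.

Lemma diff_Dv M (w : 'rV[C]_M.+1) i (Hi : (i.+1 < M.+1)%N) :
  w - w *m (omega_rho M.+1 i)^T = (w 0 (inord i) - w 0 (inord i.+1)) *: Dv M.+1 i i.+1.
Proof.
apply/matrixP => z l; rewrite ord1 subE /omega_rho mulBT' [RHS]mxE /Dv subE !mxE.
have -> : Ordinal (ltnW Hi) = inord i by apply: val_inj; rewrite /= inordK // ltnW.
have -> : Ordinal Hi = inord i.+1 by apply: val_inj; rewrite /= inordK.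
rewrite !mul0r !mul1r add0r addr0.
have F1 : (i == i.+1) = false by rewrite ltn_eqF.
have [le|li] := eqVneq (l:nat) i.
  have -> : l = inord i by apply: val_inj; rewrite /= inordK // ltnW.
  by rewrite (inordK (ltnW Hi)) F1 /= ?mulr1n subr0 mulr1.
have [le'|li'] := eqVneq (l:nat) i.+1.
  have -> : l = inord i.+1 by apply: val_inj; rewrite /= inordK.
  by rewrite /= ?mulr0n ?mulr1n sub0r mulrN1 opprB.
by rewrite subrr /= ?mulr0n subr0 mulr0.
Qed.

Lemma UH_sub M (U : 'M[C]_M.+1) :
  (forall i, (i.+1 < M.+1)%N -> invU U (omega_rho M.+1 i)) ->
  (forall j, (j.+1 < M.+1)%N -> (Dv M.+1 j j.+1 <= U)%MS) -> (UH ord0 <= U)%MS.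
Proof.
move=> HR H; apply/row_subP => k; rewrite UH_rows.
exact: (@chain_D0 _ _ H k (ltn_ord k)).
Qed.

Lemma classify M (U : 'M[C]_M.+1) :
  (forall i, (i.+1 < M.+1)%N -> invU U (omega_rho M.+1 i)) ->
  (forall w : 'rV_M.+1, (w <= U)%MS -> forall l, w 0 l = w 0 ord0) \/ (UH ord0 <= U)%MS.
Proof.
move=> HR.
case: (classic (forall w : 'rV_M.+1, (w <= U)%MS -> forall l, w 0 l = w 0 ord0)) => [H|H]; [by left|right].
have [w [Hw Hnc]] : exists w : 'rV_M.+1, (w <= U)%MS /\ ~ (forall l, w 0 l = w 0 ord0).
  apply: NNPP => H'; apply: H => w Hw; apply: NNPP => Hn; apply: H'; by exists w.
have [i [Hi Hne]] : exists i, (i.+1 < M.+1)%N /\ w 0 (inord i) <> w 0 (inord i.+1).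
  apply: NNPP => H'; apply: Hnc; apply: adj => i Hi; apply: NNPP => Hn; apply: H'; by exists i.
have HD : (Dv M.+1 i i.+1 <= U)%MS.
  have H1 : (w - w *m (omega_rho M.+1 i)^T <= U)%MS.
    by apply: subsub => //; exact: inv_row Hw (HR i Hi).
  rewrite diff_Dv // in H1.
  have := scalemx_sub (w 0 (inord i) - w 0 (inord i.+1))^-1 H1.
  by rewrite scalerA mulVf ?scale1r // subr_eq0; apply/eqP.
apply: UH_sub => //; exact: (@chain_all _ _ HR i Hi HD).
Qed.


Lemma scaleE N (A : 'rV[C]_N) t l : (t *: A) 0 l = t * A 0 l.
Proof. by rewrite !mxE. Qed.

Lemma L_case M (U A : 'M[C]_M.+1) : (0 < \rank U)%N ->
  (forall w : 'rV_M.+1, (w <= U)%MS -> forall l, w 0 l = w 0 ord0) -> invU U A ->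
  forall l, (one_r M.+1 *m A^T) 0 l = (one_r M.+1 *m A^T) 0 ord0.
Proof.
move=> Hr HL HA.
have HU : U != 0 by rewrite -mxrank_eq0 -lt0n.
have Hw : (nz_row U <= U)%MS := nz_row_sub U.
have wn0 : nz_row U != 0 by rewrite nz_row_eq0.
have w0 : nz_row U 0 ord0 != 0.
  apply/negP => /eqP w0; move/eqP: wn0; apply; apply/matrixP => z l.
  by rewrite ord1 (HL _ Hw l) w0 [RHS]mxE.
have H1 : (one_r M.+1 <= U)%MS.
  have -> : one_r M.+1 = (nz_row U 0 ord0)^-1 *: nz_row U.
    apply/matrixP => z l; rewrite ord1 [LHS]mxE [RHS]mxE (HL _ Hw l) mulVf //.
  exact: scalemx_sub.
move=> l; exact: HL _ (inv_row H1 HA) l.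
Qed.

Lemma H_case M (U A : 'M[C]_M.+1) : (\rank U < M.+1)%N ->
  (UH ord0 <= U)%MS -> invU U A ->
  forall a : 'I_M.+1, (one_r M.+1 *m A) 0 a = (one_r M.+1 *m A) 0 ord0.
Proof.
move=> Hr HH HA.
have key : forall v : 'rV_M.+1, v *m one_c _ = 0 -> (v *m A^T) *m one_c _ = 0.
  move=> v Hv; apply: NNPP => Hn.
  have Hv' : (v <= U)%MS.
    by rewrite -(@UH_fix _ ord0 _ v Hv); apply: submx_trans (submxMl _ _) HH.
  have Hu := inv_row Hv' HA.
  set u := v *m A^T in Hu Hn.
  set s := (u *m one_c M.+1) 0 0.
  have sn0 : s != 0.
    apply/eqP => s0; apply: Hn; apply: mx11_eq; rewrite -/s s0 mxE //.
  have Hfull : (1%:M <= U)%MS.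
    apply/row_subP => k; set x := row k (1%:M : 'M[C]_M.+1).
    set t := (x *m one_c M.+1) 0 0 / s.
    have -> : x = (x - t *: u) + t *: u by rewrite subrK.
    apply: addmx_sub; last exact: scalemx_sub.
    apply: (submx_trans _ HH).
    rewrite -(@UH_fix _ ord0 _ (x - t *: u)) ?submxMl //.
    apply: mx11_eq; rewrite mulmxBl -scalemxAl subE scaleE -/s /t divfK // subrr [RHS]mxE //.
  move: Hr; rewrite ltn_neqAle => /andP[Hne _]; move/negP: Hne; apply.
  by rewrite sub1mx in Hfull.
move=> a.
have Hz : A^T *m one_c M.+1 = (one_r M.+1 *m A)^T by rewrite trmx_mul /one_r trmx_const.
have HD : Dv M.+1 a 0 *m one_c M.+1 = 0.
  rewrite /Dv mulmxBl (ev_mul a) (ev_mul (ord0 : 'I_M.+1)) !row_const subrr //.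
have := key _ HD; rewrite -mulmxA Hz /Dv mulmxBl (ev_mul a) (ev_mul (ord0 : 'I_M.+1)).
move/matrixP => /(_ 0 0); rewrite !mxE => /eqP; rewrite subr_eq0 => /eqP //.
Qed.


Lemma blk_row M i a b c d : (i < M)%N -> a + b = 1 -> c + d = 1 ->
  one_r M.+1 *m (blk2 M.+1 i a b c d)^T = one_r M.+1.
Proof.
move=> Hi Hab Hcd; apply/matrixP => z l; rewrite ord1 (@mulBT' _ _ _ _ _ _ _ _ (Hi : (i.+1 < M.+1)%N)).
rewrite ![one_r _ 0 _]mxE !mulr1 Hab Hcd.
by case: ifP => _ //; case: ifP.
Qed.

Lemma blk_col M i a b c d : (i < M)%N -> a + c = 1 -> b + d = 1 ->
  one_r M.+1 *m blk2 M.+1 i a b c d = one_r M.+1.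
Proof.
by move=> Hi Hac Hbd; rewrite -(trmxK (blk2 _ _ a b c d)) blk2_tr blk_row.
Qed.

Lemma blk_row_inv M a b c d : (1 < M)%N ->
  (forall l, (one_r M.+1 *m (blk2 M.+1 0 a b c d)^T) 0 l =
             (one_r M.+1 *m (blk2 M.+1 0 a b c d)^T) 0 ord0) ->
  a + b = 1 /\ c + d = 1.
Proof.
move=> HM H.
have H0 : (0 < M)%N by lia.
have E := fun l => @mulBT' M.+1 (one_r M.+1) 0 a b c d l (H0 : (1 < M.+1)%N).
have H1 := H (Ordinal (H0 : (1 < M.+1)%N)).
have H2 := H (Ordinal (HM : (2 < M.+1)%N)).
rewrite !E /= ![one_r _ 0 _]mxE !mulr1 in H1 H2.
by rewrite H1 -H2.
Qed.

Lemma blk_col_inv M a b c d : (1 < M)%N ->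
  (forall l, (one_r M.+1 *m blk2 M.+1 0 a b c d) 0 l =
             (one_r M.+1 *m blk2 M.+1 0 a b c d) 0 ord0) ->
  a + c = 1 /\ b + d = 1.
Proof.
move=> HM H; apply: blk_row_inv HM _ => l.
by rewrite -blk2_tr trmxK; apply: H.
Qed.

Lemma forward M c (sigma : nat -> 'I_c -> 'M[C]_M.+1) :
  reducible (rep_image (@omega_rho M.+1) sigma) ->
  (forall i t, (i < M)%N -> forall l,
     (one_r M.+1 *m (sigma i t)^T) 0 l = (one_r M.+1 *m (sigma i t)^T) 0 ord0) \/
  (forall i t, (i < M)%N -> forall a,
     (one_r M.+1 *m sigma i t) 0 a = (one_r M.+1 *m sigma i t) 0 ord0).
Proof.
case=> U [Hr0 [Hr1 HG]].
have HS : forall i t, (i < M)%N -> invU U (sigma i t).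
  move=> i t Hi; apply: HG; apply: gen_base; exists i; split => //; right; by exists t.
have HR : forall i, (i.+1 < M.+1)%N -> invU U (omega_rho M.+1 i).
  move=> i Hi; apply: HG; apply: gen_base; exists i; split => //; by left.
case: (@classify M U HR) => [HL|HH]; [left|right] => i t Hi.
  exact: (@L_case M U _ Hr0 HL (HS i t Hi)).
exact: (@H_case M U _ Hr1 HH (HS i t Hi)).
Qed.

Lemma backL M c (sigma : nat -> 'I_c -> 'M[C]_M.+1) : (1 < M)%N ->
  (forall i t, (i < M)%N -> one_r M.+1 *m (sigma i t)^T = one_r M.+1) ->
  reducible (rep_image (@omega_rho M.+1) sigma).
Proof.
move=> HM H; apply: back_L; first by lia.
move=> A [i [Hi [->|[t ->]]]]; last exact: H.
by rewrite /omega_rho blk_row // ?add0r ?addr0.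
Qed.

Lemma backH M c (sigma : nat -> 'I_c -> 'M[C]_M.+1) : (1 < M)%N ->
  (forall i t, (i < M)%N -> one_r M.+1 *m sigma i t = one_r M.+1) ->
  reducible (rep_image (@omega_rho M.+1) sigma).
Proof.
move=> HM H; apply: back_H; first by lia.
move=> A [i [Hi [->|[t ->]]]]; last exact: H.
by rewrite /omega_rho blk_col // ?add0r ?addr0.
Qed.


Theorem proposition6p3 (n c : nat) (r2 : C) (s1 s2 s3 s4 : 'I_c -> C) :
  (3 <= n)%N -> (1 <= c)%N -> r2 != 0 ->
  (forall t, s1 t != 0) -> (forall t, s2 t != 0) ->
  (forall t, s3 t != 0) -> (forall t, s4 t != 0) ->
  [/\ reducible (rep_image (@omega_rho n) (omega1_sigma n r2 s2 s3))
        <-> (forall t, s2 t = r2 /\ s3 t = r2^-1),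
      reducible (rep_image (@omega_rho n) (omega2_sigma n r2 s2 s4))
        <-> (forall t, s2 t / r2 + s4 t = 1)
    & reducible (rep_image (@omega_rho n) (omega3_sigma n r2 s1 s2))
        <-> (forall t, s1 t + s2 t / r2 = 1)].
Proof.
case: n => [|M] Hn //= _ r2n0 Hs1 _ _ Hs4.
have HM : (1 < M)%N by lia.
have H0 : (0 < M)%N by lia.
split; split.
- move/forward => [HL|HH] t.
    have [Hb Hc] := @blk_row_inv M _ _ _ _ HM (HL 0%N t H0).
    rewrite add0r in Hb; rewrite addr0 in Hc.
    split; first by rewrite -(divfK r2n0 (s2 t)) Hb mul1r.
    by rewrite -(mulKf r2n0 (s3 t)) Hc mulr1.
  have [Hc Hb] := @blk_col_inv M _ _ _ _ HM (HH 0%N t H0).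
  rewrite addr0 in Hb; rewrite add0r in Hc.
  split; first by rewrite -(divfK r2n0 (s2 t)) Hb mul1r.
  by rewrite -(mulKf r2n0 (s3 t)) Hc mulr1.
- move=> H; apply: backL => // i t Hi; rewrite /omega1_sigma.
  have [-> ->] := H t; apply: blk_row => //.
    by rewrite divff // add0r.
  by rewrite mulfV // addr0.
- move/forward => [HL|HH] t.
    have [_ Hc] := @blk_row_inv M _ _ _ _ HM (HL 0%N t H0).
    have : s4 t = 0 by apply: (@addrI _ 1); rewrite addr0.
    by move/eqP; rewrite (negbTE (Hs4 t)).
  by have [_ Hb] := @blk_col_inv M _ _ _ _ HM (HH 0%N t H0).
- move=> H; apply: backH => // i t Hi; rewrite /omega2_sigma.
  by apply: blk_col => //; rewrite add0r.
- move/forward => [HL|HH] t.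
    by have [Hb _] := @blk_row_inv M _ _ _ _ HM (HL 0%N t H0).
  have [Hc _] := @blk_col_inv M _ _ _ _ HM (HH 0%N t H0).
  have : s1 t = 0 by apply: (@addIr _ 1); rewrite add0r.
  by move/eqP; rewrite (negbTE (Hs1 t)).
- move=> H; apply: backL => // i t Hi; rewrite /omega3_sigma.
  by apply: blk_row => //; rewrite addr0.
Qed.
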